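(* Let $m\in\mathbb N$, let $M_1,M_2\in{\rm Mat}_m(\mathbb Z)$, and let $S\in{\rm Mat}_m(\mathbb Z)\cap GL_m(\mathbb Q)$ satisfy $M_2=S^{-1}M_1S$. Then for every $n\in\mathbb N$ with $\gcd(n,\det(S))=1$, the move graphs $\Gamma_{M_1,\,n}$ and $\Gamma_{M_2,\,n}$ are isomorphic.
   Context: $\mathbb N$ is the set of positive integers and $\mathbb Z_n$ the integers modulo $n$. $GL_m(\mathbb Q)$ denotes the invertible $m\times m$ rational matrices. For $M\in{\rm Mat}_m(\mathbb Z)$, the move graph $\Gamma_{M,\,n}$ is the directed graph with vertex set $\mathbb Z_n^m$ and arc set $\{({\bf x},{\bf y}) : {\bf y}^T=M{\bf x}^T \text{ in } \mathbb Z_n^m\}$ (loops allowed). *)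

(* Defs.v *)
From HB Require Import structures.
From mathcomp Require Import all_boot all_order all_algebra.
Set Implicit Arguments. Unset Strict Implicit. Unset Printing Implicit Defensive.
Import Order.TTheory GRing.Theory Num.Theory.
Local Open Scope ring_scope.

(* Vertices of the move graph: vectors in (Z_n)^m, represented as finite
   functions 'I_m -> 'I_n (residues 0..n-1); this also works for n = 1. *)
Definition vertex (m n : nat) := {ffun 'I_m -> 'I_n}.

(* Arc (x, y) of Gamma_{M,n}:  y^T = M x^T in Z_n^m, i.e. for each i,
   y_i is the residue mod n of sum_j M_ij x_j. *)
Definition move_arc (m n : nat) (M : 'M[int]_m) : rel (vertex m n) :=
  fun x y => [forall i : 'I_m,
    ((nat_of_ord (y i))%:Z == ((\sum_(j < m) M i j * (nat_of_ord (x j))%:Z) %% n%:Z)%Z)].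

Definition digraph_iso (V W : finType) (e1 : rel V) (e2 : rel W) : Prop :=
  exists f : V -> W, bijective f /\ forall x y, e1 x y = e2 (f x) (f y).

Definition mxQ (m : nat) (A : 'M[int]_m) : 'M[rat]_m := map_mx (fun z : int => z%:~R) A.

(* Main.v *)
Require Import Defs.
From HB Require Import structures.
From mathcomp Require Import all_boot all_order all_algebra.
Import Order.TTheory GRing.Theory Num.Theory.
Local Open Scope ring_scope.
Set Implicit Arguments. Unset Strict Implicit.

Definition vec (m n : nat) (x : vertex m n) : 'cV[int]_m :=
  \col_j (nat_of_ord (x j))%:Z.
Definition red (m n' : nat) (v : 'cV[int]_m) : vertex m n'.+1 :=
  [ffun i => inord (absz ((v i ord0) %% (n'.+1)%:Z)%Z)].
Definition meq (m n : nat) (u v : 'cV[int]_m) : bool :=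
  [forall i, (u i ord0 == v i ord0 %[mod n%:Z])%Z].

Lemma meqP m n (u v : 'cV[int]_m) :
  reflect (forall i, (n%:Z %| (u i ord0 - v i ord0)%R)%Z) (meq n u v).
Proof.
apply: (iffP forallP) => H i; [by rewrite -eqz_mod_dvd; apply: H|].
by rewrite eqz_mod_dvd; apply: H.
Qed.

Lemma meq_refl m n (u : 'cV[int]_m) : meq n u u.
Proof. by apply/meqP => i; rewrite subrr dvdz0. Qed.

Lemma meq_sym m n (u v : 'cV[int]_m) : meq n u v -> meq n v u.
Proof. by move/meqP=> H; apply/meqP => i; rewrite -opprB rpredN. Qed.

Lemma meq_trans m n (u v w : 'cV[int]_m) : meq n u v -> meq n v w -> meq n u w.
Proof.
move/meqP=> H1 /meqP H2; apply/meqP => i.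
have -> : u i ord0 - w i ord0 = (u i ord0 - v i ord0) + (v i ord0 - w i ord0) by rewrite addrA subrK.
by rewrite rpredD.
Qed.

Lemma meq_mul m n (A : 'M[int]_m) (u v : 'cV[int]_m) :
  meq n u v -> meq n (A *m u) (A *m v).
Proof.
move/meqP=> H; apply/meqP => i.
have -> : (A *m u) i ord0 - (A *m v) i ord0 = (A *m (u - v)) i ord0.
  by rewrite mulmxBr !mxE.
rewrite mxE; apply: rpred_sum => j _.
by rewrite dvdz_mull // !mxE.
Qed.

Lemma vec_red m n' (v : 'cV[int]_m) : meq n'.+1 (vec (red n' v)) v.
Proof.
apply/forallP => i; rewrite !mxE ffunE inordK.
  rewrite gez0_abs ?modz_ge0 // modz_mod //.
rewrite -ltz_nat gez0_abs ?modz_ge0 // ltz_pmod //.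
Qed.

Lemma meq_vec m n (x y : vertex m n) : meq n (vec x) (vec y) -> x = y.
Proof.
move/forallP=> H; apply/ffunP => i; apply/val_inj => /=.
have := H i; rewrite !mxE !modz_small; last first.
- by rewrite ltz_nat ltn_ord andbT.
- by rewrite ltz_nat ltn_ord andbT.
by move/eqP; case.
Qed.

Lemma meq_cancel m n (S : 'M[int]_m) (u v : 'cV[int]_m) :
  coprime n `|\det S|%N -> meq n (\adj S *m u) (\adj S *m v) -> meq n u v.
Proof.
move=> cop /(meq_mul S); rewrite !mulmxA mul_mx_adj !mul_scalar_mx.
move/meqP=> H; apply/meqP => i; have := H i.
have cz : coprimez n%:Z (\det S) by rewrite coprimezE.
by rewrite !mxE -mulrBr (Gauss_dvdzr _ cz).
Qed.

Lemma arcE m n (M : 'M[int]_m) (x y : vertex m n) :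
  move_arc M x y = meq n (vec y) (M *m vec x).
Proof.
apply: eq_forallb => i; rewrite !mxE (@modz_small (nat_of_ord (y i))%:Z); last first.
  by rewrite ltz_nat ltn_ord andbT.
by congr (_ == (_ %% _)%Z); apply: eq_bigr => j _; rewrite mxE.
Qed.

Theorem theorem3p5 (m : nat) (M1 M2 S : 'M[int]_m) :
  (0 < m)%N ->
  mxQ S \in unitmx ->
  mxQ M2 = invmx (mxQ S) *m mxQ M1 *m mxQ S ->
  forall n : nat, (0 < n)%N -> coprime n `|\det S|%N ->
    digraph_iso (@move_arc m n M1) (@move_arc m n M2).
Proof.
move=> _ Su HM [//|n'] _ cop.
set n := n'.+1.
have mxQM (A B : 'M[int]_m) : mxQ (A *m B) = mxQ A *m mxQ B.
  by rewrite /mxQ map_mxM.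
have mxQinj (A B : 'M[int]_m) : mxQ A = mxQ B -> A = B.
  move=> E; apply/matrixP => i j; have := congr1 (fun X : 'M[rat]_m => X i j) E.
  by rewrite /mxQ !mxE => /intr_inj.
have SM : S *m M2 = M1 *m S.
  apply: mxQinj; rewrite !mxQM HM !mulmxA mulmxV // mul1mx //.
have d0 : \det S != 0.
  move: Su; rewrite unitmxE unitfE /mxQ det_map_mx /=.
  by apply: contra => /eqP ->; rewrite rmorph0.
set A := \adj S.
have AM : A *m M1 = M2 *m A.
  have E : (\det S) *: (A *m M1) = (\det S) *: (M2 *m A).
    rewrite -mul_mx_scalar -(mul_mx_adj S) -/A -[RHS]mul_scalar_mx -(mul_adj_mx S) -/A.
    by rewrite !mulmxA -(mulmxA A M1 S) -SM !mulmxA.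
  apply/matrixP => i j; have := congr1 (fun X : 'M[int]_m => X i j) E.
  by rewrite !mxE => /(mulfI d0).
pose f (x : vertex m n) : vertex m n := red n' (A *m vec x).
exists f; split.
  apply: injF_bij => x y fxy; apply: meq_vec; apply: (meq_cancel cop).
  apply: meq_trans (meq_sym (vec_red n' (A *m vec x))) _.
  by rewrite -/(f x) fxy; apply: vec_red.
move=> x y; rewrite !arcE.
apply/idP/idP => H.
- apply: meq_trans (vec_red _ _) _.
  apply: meq_trans (meq_mul A H) _.
  rewrite mulmxA AM -mulmxA; apply: meq_mul.
  exact: meq_sym (vec_red _ _).
- apply: (meq_cancel cop); rewrite mulmxA AM -mulmxA.
  apply: meq_trans (meq_sym (vec_red n' (A *m vec y))) _.
  apply: meq_trans H _.
  by apply: meq_mul; apply: vec_red.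
Qed.
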